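(* For the symmetric walk started at $X_0=[\alpha N]$ with $\alpha\in(0,1)$, $$\lim_{N\to\infty}\frac{E_{[\alpha N]}[R_N]}{N}=\int_0^1\beta\,g_\alpha(\beta)\,d\beta=-\alpha\log\alpha-(1-\alpha)\log(1-\alpha).$$ Here $g_\alpha$ is the density defined in the context. The right-hand side is the entropy of the exit distribution: in the limit the walk exits at $0$ with probability $1-\alpha$ and at $N$ with probability $\alpha$. The maximum value, $\log 2$, is attained at $\alpha=1/2$.
   Context: Fix $N\ge2$ and let $\mathcal T_N=\{0,1,\dots,N\}$. Let $(X_n)_{n\ge0}$ be the symmetric nearest-neighbour random walk on $\mathcal T_N$: each step is $\pm1$ with probability $1/2$ each, and the walk is stopped the first time it is at $0$ or $N$. $P_x$ and $E_x$ denote probability and expectation with $X_0=x$. Let $T_a=\inf\{n\ge1:X_n=a\}$ and $\tau_N=T_0\wedge T_N$. Let $G(y)=\sum_{k=0}^{\tau_N}\mathbf 1\{X_k=y\}$, and let the range be $R_N=\#\{y\in\mathcal T_N:G(y)\ge1\}$. $[\cdot]$ is the integer part. With $a=\alpha\wedge(1-\alpha)$ and $b=\alpha\vee(1-\alpha)$, the density $g_\alpha$ is given by $g_\alpha(\beta)=a/\beta^2$ for $a<\beta<b$, $g_\alpha(\beta)=1/\beta^2$ for $b\le\beta\le1$, and $g_\alpha(\beta)=0$ otherwise. *)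

(* Defs.v *)
From Stdlib Require Import Reals Lra Lia ZArith Arith List.
Import ListNotations.
Open Scope R_scope.

(* Returns the list of visited positions X_0, X_1, ..., X_{min(|s|, tau_N)}. *)
Fixpoint traj (N x : nat) (s : list bool) : list nat :=
  x :: (if (Nat.eqb x 0 || Nat.eqb x N)%bool then []
        else match s with
             | [] => []
             | b :: s' => traj N (if b then S x else Nat.pred x) s'
             end).

Definition range_of (N : nat) (p : list nat) : nat :=
  length (filter (fun y => existsb (Nat.eqb y) p) (seq 0 (S N))).

(* All step sequences of length n (each has probability (1/2)^n). *)
Fixpoint all_steps (n : nat) : list (list bool) :=
  match n with
  | O => [ [] ]
  | S m => map (cons true) (all_steps m) ++ map (cons false) (all_steps m)
  end.

(* E_x[ R_N^{(n)} ], the expected range of the walk observed up to time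
   min(n, tau_N). *)
Definition exp_range_trunc (N x n : nat) : R :=
  fold_right Rplus 0
    (map (fun s => (/ 2) ^ n * INR (range_of N (traj N x s))) (all_steps n)).

(* E_x[R_N] is the limit as n -> infinity of the truncated expectations
   (monotone convergence; tau_N < infinity a.s.). *)
Definition is_exp_range (N x : nat) (l : R) : Prop :=
  Un_cv (fun n => exp_range_trunc N x n) l.

Definition floorN (t : R) : nat := Z.to_nat (Int_part t).

Definition g_alpha (alpha beta : R) : R :=
  let a := Rmin alpha (1 - alpha) in
  let b := Rmax alpha (1 - alpha) in
  if Rlt_dec a beta then
    (if Rlt_dec beta b then a / beta ^ 2
     else if Rle_dec beta 1 then 1 / beta ^ 2 else 0)
  else 0.

Definition entropy (alpha : R) : R :=
  - alpha * ln alpha - (1 - alpha) * ln (1 - alpha).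

(* Main.v *)
Require Import Defs.
From Stdlib Require Import Reals Lra Lia ZArith Arith List.
Import ListNotations.
Open Scope R_scope.

Definition sumR (l : list R) : R := fold_right Rplus 0 l.
Definition Ex (n : nat) (f : list bool -> R) : R :=
  sumR (map (fun s => (/ 2) ^ n * f s) (all_steps n)).

Lemma sumR_app l1 l2 : sumR (l1 ++ l2) = sumR l1 + sumR l2.
Proof. induction l1; simpl; [lra|]. unfold sumR in *; simpl in *; rewrite IHl1; ring. Qed.

Lemma sumR_map_scal {A : Type} (c : R) (h : A -> R) l :
  sumR (map (fun s => c * h s) l) = c * sumR (map h l).
Proof. induction l; simpl; [ring|]. unfold sumR in *; simpl; rewrite IHl; ring. Qed.

Lemma sumR_map_ext {A : Type} (f g : A -> R) l :
  (forall x, In x l -> f x = g x) -> sumR (map f l) = sumR (map g l).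
Proof. intros H; rewrite (map_ext_in f g l H); reflexivity. Qed.

Lemma Ex_ext n f g : (forall s, f s = g s) -> Ex n f = Ex n g.
Proof. intros H; unfold Ex; apply sumR_map_ext; intros; rewrite H; reflexivity. Qed.

Lemma Ex_S n f : Ex (S n) f = / 2 * Ex n (fun s => f (true :: s)) + / 2 * Ex n (fun s => f (false :: s)).
Proof.
  unfold Ex; simpl all_steps; rewrite map_app, sumR_app, !map_map.
  rewrite <- !(sumR_map_scal (/2)). f_equal; apply sumR_map_ext; intros; simpl; ring.
Qed.

Lemma Ex_0 f : Ex 0 f = f [].
Proof. unfold Ex; simpl; ring. Qed.

Lemma Ex_const n c : Ex n (fun _ => c) = c.
Proof. induction n; [rewrite Ex_0; reflexivity|]. rewrite Ex_S, IHn; field. Qed.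

Lemma Ex_mono n f g : (forall s, f s <= g s) -> Ex n f <= Ex n g.
Proof.
  revert f g; induction n; intros f g H.
  - rewrite !Ex_0; apply H.
  - rewrite !Ex_S. assert (H1 := IHn (fun s => f (true :: s)) (fun s => g (true :: s)) (fun s => H _)).
    assert (H2 := IHn (fun s => f (false :: s)) (fun s => g (false :: s)) (fun s => H _)). lra.
Qed.

Lemma Ex_plus n f g : Ex n (fun s => f s + g s) = Ex n f + Ex n g.
Proof.
  revert f g; induction n; intros f g.
  - rewrite !Ex_0; reflexivity.
  - rewrite !Ex_S. rewrite (IHn (fun s => f (true :: s)) (fun s => g (true :: s))).
    rewrite (IHn (fun s => f (false :: s)) (fun s => g (false :: s))). ring.
Qed.

Lemma Ex_sum n (h : nat -> list bool -> R) ys :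
  Ex n (fun s => sumR (map (fun y => h y s) ys)) = sumR (map (fun y => Ex n (h y)) ys).
Proof.
  induction ys; simpl.
  - apply Ex_const.
  - rewrite (Ex_plus n (h a) (fun s => sumR (map (fun y => h y s) ys))). unfold sumR in *; rewrite IHys; reflexivity.
Qed.

Lemma INR_length_filter (P : nat -> bool) l :
  INR (length (filter P l)) = sumR (map (fun y => if P y then 1 else 0) l).
Proof.
  induction l; simpl; [reflexivity|]. unfold sumR in *; simpl.
  destruct (P a); simpl length; [rewrite S_INR|]; rewrite IHl; ring.
Qed.

Definition ind (N x y : nat) (s : list bool) : R :=
  if existsb (Nat.eqb y) (traj N x s) then 1 else 0.
Definition q (N n x y : nat) : R := Ex n (ind N x y).

Lemma exp_range_q N x n :
  exp_range_trunc N x n = sumR (map (fun y => q N n x y) (seq 0 (S N))).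
Proof.
  change (exp_range_trunc N x n) with (Ex n (fun s => INR (range_of N (traj N x s)))).
  unfold q, ind. rewrite <- Ex_sum. apply Ex_ext; intros s.
  unfold range_of; rewrite INR_length_filter; reflexivity.
Qed.

Lemma traj_head N x s : exists r, traj N x s = x :: r.
Proof. destruct s; simpl; eexists; reflexivity. Qed.

Lemma q_diag N n y : q N n y y = 1.
Proof.
  unfold q. rewrite <- (Ex_const n 1). apply Ex_ext; intros s. unfold ind.
  destruct (traj_head N y s) as [r ->]. simpl. rewrite Nat.eqb_refl. reflexivity.
Qed.

Lemma q_abs N n x y : x <> y -> (x = 0 \/ x = N)%nat -> q N n x y = 0.
Proof.
  intros Hxy Hx. unfold q. rewrite <- (Ex_const n 0). apply Ex_ext; intros s. unfold ind.
  assert (E : traj N x s = [x]).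
  { assert (Hb : (Nat.eqb x 0 || Nat.eqb x N)%bool = true).
    { destruct Hx as [-> | ->]; [reflexivity|]. rewrite Nat.eqb_refl, Bool.orb_true_r; reflexivity. }
    destruct s; simpl; rewrite Hb; reflexivity. }
  rewrite E; simpl. apply Nat.eqb_neq in Hxy. rewrite Nat.eqb_sym, Hxy. reflexivity.
Qed.

Lemma q_0 N x y : x <> y -> q N 0 x y = 0.
Proof.
  intros Hxy. unfold q. rewrite Ex_0. unfold ind. simpl.
  apply Nat.eqb_neq in Hxy. rewrite Nat.eqb_sym, Hxy.
  destruct (Nat.eqb x 0 || Nat.eqb x N)%bool; reflexivity.
Qed.

Lemma q_step N n x y : x <> y -> x <> 0%nat -> x <> N ->
  q N (S n) x y = / 2 * q N n (S x) y + / 2 * q N n (Nat.pred x) y.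
Proof.
  intros Hxy H0 HN. unfold q. rewrite Ex_S. f_equal; f_equal; apply Ex_ext; intros s; unfold ind; simpl;
  apply Nat.eqb_neq in Hxy; apply Nat.eqb_neq in H0; apply Nat.eqb_neq in HN;
  rewrite H0, HN, Nat.eqb_sym, Hxy; reflexivity.
Qed.

Lemma q_bounds N n x y : 0 <= q N n x y <= 1.
Proof.
  unfold q; split.
  - rewrite <- (Ex_const n 0). apply Ex_mono; intros s; unfold ind; destruct existsb; lra.
  - rewrite <- (Ex_const n 1). apply Ex_mono; intros s; unfold ind; destruct existsb; lra.
Qed.

Lemma q_mono N y n x : q N n x y <= q N (S n) x y.
Proof.
  revert x; induction n; intros x.
  - destruct (Nat.eq_dec x y) as [->|Hxy]; [rewrite !q_diag; lra|].
    rewrite q_0 by auto. apply q_bounds.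
  - destruct (Nat.eq_dec x y) as [->|Hxy]; [rewrite !q_diag; lra|].
    destruct (Nat.eq_dec x 0) as [H0|H0]; [rewrite !q_abs by auto; lra|].
    destruct (Nat.eq_dec x N) as [HN|HN]; [rewrite !q_abs by auto; lra|].
    rewrite (q_step N (S n)), (q_step N n) by auto.
    assert (H1 := IHn (S x)); assert (H2 := IHn (Nat.pred x)). lra.
Qed.


Lemma q_ub N x y : has_ub (fun n => q N n x y).
Proof. exists 1. intros z [i ->]. apply q_bounds. Qed.

Definition L (N y x : nat) : R :=
  proj1_sig (growing_cv (fun n => q N n x y) (fun n => q_mono N y n x) (q_ub N x y)).

Lemma L_cv N y x : Un_cv (fun n => q N n x y) (L N y x).
Proof. unfold L. destruct growing_cv; assumption. Qed.

Lemma cv_const_eq (u : nat -> R) c : (forall n, u n = c) -> Un_cv u c.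
Proof. intros H eps Heps; exists 0%nat; intros; rewrite H; unfold R_dist; rewrite Rminus_diag, Rabs_R0; lra. Qed.

Lemma L_diag N y : L N y y = 1.
Proof. apply (UL_sequence (fun n => q N n y y)); [apply L_cv|]. apply cv_const_eq; intros; apply q_diag. Qed.

Lemma L_abs N y x : x <> y -> (x = 0 \/ x = N)%nat -> L N y x = 0.
Proof. intros; apply (UL_sequence (fun n => q N n x y)); [apply L_cv|]. apply cv_const_eq; intros; apply q_abs; auto. Qed.

Lemma cv_ext (u v : nat -> R) l : (forall n, u n = v n) -> Un_cv u l -> Un_cv v l.
Proof. intros H Hu eps Heps; destruct (Hu eps Heps) as [N0 HN]; exists N0; intros; rewrite <- H; auto. Qed.

Lemma cv_const c : Un_cv (fun _ => c) c.
Proof. apply cv_const_eq; reflexivity. Qed.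

Lemma L_step N y x : x <> y -> x <> 0%nat -> x <> N ->
  L N y x = / 2 * L N y (S x) + / 2 * L N y (Nat.pred x).
Proof.
  intros. apply (UL_sequence (fun n => q N (n + 1) x y)).
  - apply (CV_shift' (fun n => q N n x y) 1 (L N y x) (L_cv N y x)).
  - apply (cv_ext (fun n => / 2 * q N n (S x) y + / 2 * q N n (Nat.pred x) y)).
    + intros n; rewrite Nat.add_1_r, q_step; auto.
    + apply CV_plus; apply CV_mult; try apply cv_const; apply L_cv.
Qed.

Lemma lin_harm (h : nat -> R) (m : nat) : (0 < m)%nat -> h 0%nat = 0 -> h m = 1 ->
  (forall k, (0 < k < m)%nat -> h k = / 2 * h (S k) + / 2 * h (Nat.pred k)) ->
  forall k, (k <= m)%nat -> h k = INR k / INR m.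
Proof.
  intros Hm H0 Hm1 Hh.
  assert (P : forall k, (S k <= m)%nat -> h k = INR k * h 1%nat /\ h (S k) = INR (S k) * h 1%nat).
  { induction k; intros Hk.
    - split; [rewrite H0; simpl; ring | simpl; ring].
    - destruct IHk as [A1 A2]; [lia|]. split; [exact A2|].
      assert (E := Hh (S k) ltac:(lia)). simpl Nat.pred in E.
      rewrite !S_INR in *. rewrite A1, A2 in E. lra. }
  assert (Hm' : h m = INR m * h 1%nat).
  { destruct m; [lia|]. apply (P m); lia. }
  assert (INR m > 0) by (apply lt_0_INR; lia).
  assert (Hh1 : h 1%nat = / INR m). { rewrite Hm1 in Hm'. field_simplify_eq; [lra| lra]. }
  intros k Hk. destruct (Nat.eq_dec k m) as [->|Hne]; [rewrite Hm1; field; lra|].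
  destruct (P k ltac:(lia)) as [A _]. rewrite A, Hh1. field; lra.
Qed.

Definition Qf (N x y : nat) : R :=
  if Nat.eqb x y then 1 else if Nat.ltb x y then INR x / INR y else INR (N - x) / INR (N - y).

Lemma L_val N y x : (x <= N)%nat -> (y <= N)%nat -> L N y x = Qf N x y.
Proof.
  intros Hx Hy. unfold Qf.
  destruct (Nat.eqb_spec x y) as [->|Hxy]; [apply L_diag|].
  destruct (Nat.ltb_spec x y) as [Hlt|Hge].
  - apply (lin_harm (L N y) y); try lia.
    + apply L_abs; lia.
    + apply L_diag.
    + intros k Hk. apply L_step; lia.
  - set (h := fun k => L N y (N - k)).
    assert (E : L N y x = h (N - x)%nat) by (unfold h; f_equal; lia).
    rewrite E. apply (lin_harm h (N - y)); try lia.
    + unfold h. rewrite Nat.sub_0_r. apply L_abs; lia.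
    + unfold h. replace (N - (N - y))%nat with y by lia. apply L_diag.
    + intros k Hk. unfold h. rewrite L_step by lia.
      replace (S (N - k)) with (N - Nat.pred k)%nat by lia.
      replace (Nat.pred (N - k)) with (N - S k)%nat by lia. ring.
Qed.

Lemma cv_sum {A : Type} (u : nat -> A -> R) (l : A -> R) ys :
  (forall y, In y ys -> Un_cv (fun n => u n y) (l y)) ->
  Un_cv (fun n => sumR (map (fun y => u n y) ys)) (sumR (map l ys)).
Proof.
  induction ys; intros H; simpl.
  - apply cv_const.
  - apply CV_plus; [apply H; left; auto|]. apply IHys; intros; apply H; right; auto.
Qed.

Lemma exp_range_cv N x : (x <= N)%nat ->
  is_exp_range N x (sumR (map (fun y => Qf N x y) (seq 0 (S N)))).
Proof.
  intros Hx. unfold is_exp_range.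
  apply (cv_ext (fun n => sumR (map (fun y => q N n x y) (seq 0 (S N))))).
  { intros; rewrite exp_range_q; reflexivity. }
  apply cv_sum. intros y Hy. apply in_seq in Hy. rewrite <- L_val by lia. apply L_cv.
Qed.


Definition H (u m : nat) : R := sumR (map (fun k => / INR k) (seq (S u) m)).

Lemma reindex (g : nat -> R) N x : (x <= N)%nat ->
  sumR (map (fun y => g (N - y)%nat) (seq 0 x)) = sumR (map g (seq (S (N - x)) x)).
Proof.
  induction x; intros Hx; [reflexivity|].
  rewrite seq_S, map_app, sumR_app, IHx by lia.
  replace (S (N - S x)) with (N - x)%nat by lia. simpl. unfold sumR; simpl. ring.
Qed.

Lemma sum_decomp N x : (x <= N)%nat ->
  sumR (map (fun y => Qf N x y) (seq 0 (S N))) = 1 + INR x * H x (N - x) + INR (N - x) * H (N - x) x.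
Proof.
  intros Hx. replace (S N) with (x + S (N - x))%nat by lia.
  rewrite seq_app, map_app, sumR_app. simpl (seq (0 + x) _).
  rewrite (sumR_map_ext _ (fun y => INR (N - x) * (fun y => / INR (N - y)) y)).
  2:{ intros y Hy. apply in_seq in Hy. unfold Qf.
      destruct (Nat.eqb_spec x y); [lia|]. destruct (Nat.ltb_spec x y); [lia|].
      unfold Rdiv; reflexivity. }
  rewrite sumR_map_scal.
  rewrite (reindex (fun k => / INR k) N x Hx).
  change (sumR (map (fun y : nat => Qf N x y) (x :: seq (S x) (N - x)))) with
    (Qf N x x + sumR (map (fun y : nat => Qf N x y) (seq (S x) (N - x)))).
  unfold Qf at 1; rewrite Nat.eqb_refl.
  rewrite (sumR_map_ext (fun y => Qf N x y) (fun y => INR x * (fun y => / INR y) y) (seq (S x) (N - x))).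
  2:{ intros y Hy. apply in_seq in Hy. unfold Qf.
      destruct (Nat.eqb_spec x y); [lia|]. destruct (Nat.ltb_spec x y); [|lia].
      unfold Rdiv; reflexivity. }
  rewrite sumR_map_scal. unfold H.
  ring.
Qed.


Lemma ln_le_sub1 t : 0 < t -> ln t <= t - 1.
Proof.
  intros Ht. assert (E := exp_ineq1_le (t - 1)).
  destruct (Rle_lt_or_eq_dec t (exp (t - 1))) as [Hl|He]; [lra| |].
  - left. rewrite <- (ln_exp (t - 1)). apply ln_increasing; auto.
  - rewrite He at 1. rewrite ln_exp. lra.
Qed.

Lemma ln_div' a b : 0 < a -> 0 < b -> ln (a / b) = ln a - ln b.
Proof. intros; unfold Rdiv; rewrite ln_mult, ln_Rinv; try lra; apply Rinv_0_lt_compat; lra. Qed.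

Lemma ln_diff_bounds a b : 0 < a -> a <= b -> (b - a) / b <= ln b - ln a <= (b - a) / a.
Proof.
  intros Ha Hab. split.
  - assert (E := ln_le_sub1 (a / b) ltac:(apply Rdiv_lt_0_compat; lra)).
    rewrite ln_div' in E by lra. assert ((a / b - 1) = - ((b - a) / b)) by (field; lra). lra.
  - assert (E := ln_le_sub1 (b / a) ltac:(apply Rdiv_lt_0_compat; lra)).
    rewrite ln_div' in E by lra. assert ((b / a - 1) = ((b - a) / a)) by (field; lra). lra.
Qed.

Lemma H_S u m : H u (S m) = H u m + / (INR u + INR m + 1).
Proof.
  unfold H. rewrite seq_S, map_app, sumR_app.
  change (sumR (map (fun k => / INR k) [(S u + m)%nat])) with (/ INR (S u + m) + 0).
  rewrite plus_INR, S_INR. replace (INR u + 1 + INR m) with (INR u + INR m + 1) by ring. ring.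
Qed.

Lemma H_bounds u m : (1 <= u)%nat ->
  ln (INR u + INR m + 1) - ln (INR u + 1) <= H u m <= ln (INR u + INR m) - ln (INR u).
Proof.
  intros Hu. assert (Hu' : 1 <= INR u) by (apply (le_INR 1); lia).
  induction m.
  - unfold H; simpl; unfold sumR; simpl. rewrite !Rplus_0_r. lra.
  - rewrite H_S, S_INR.
    assert (P1 := ln_diff_bounds (INR u + INR m + 1) (INR u + INR m + 1 + 1) ltac:(pose proof (pos_INR m); lra) ltac:(lra)).
    assert (P2 := ln_diff_bounds (INR u + INR m) (INR u + INR m + 1) ltac:(pose proof (pos_INR m); lra) ltac:(lra)).
    replace (INR u + INR m + 1 + 1 - (INR u + INR m + 1)) with 1 in P1 by ring.
    replace (INR u + INR m + 1 - (INR u + INR m)) with 1 in P2 by ring.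
    replace (INR u + (INR m + 1) + 1) with (INR u + INR m + 1 + 1) by ring.
    replace (INR u + (INR m + 1)) with (INR u + INR m + 1) by ring.
    unfold Rdiv in P1, P2. rewrite Rmult_1_l in P1, P2. lra.
Qed.

Lemma floorN_spec t : 0 <= t -> INR (floorN t) <= t /\ t - 1 < INR (floorN t).
Proof.
  intros Ht. destruct (base_Int_part t) as [H1 H2].
  assert (Hz : (0 <= Int_part t)%Z).
  { assert (Hq : IZR (Int_part t) > -1) by lra. apply lt_IZR in Hq. lia. }
  unfold floorN. rewrite INR_IZR_INZ, Z2Nat.id by exact Hz. lra.
Qed.


Lemma squeeze (a b c : nat -> R) l N0 :
  (forall n, (n >= N0)%nat -> a n <= b n <= c n) -> Un_cv a l -> Un_cv c l -> Un_cv b l.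
Proof.
  intros Hb Ha Hc eps Heps. destruct (Ha eps Heps) as [N1 H1]. destruct (Hc eps Heps) as [N2 H2].
  exists (N0 + N1 + N2)%nat. intros n Hn.
  assert (A1 := H1 n ltac:(lia)); assert (A2 := H2 n ltac:(lia)); assert (B := Hb n ltac:(lia)).
  unfold R_dist in *. apply Rabs_def2 in A1; apply Rabs_def2 in A2. apply Rabs_def1; lra.
Qed.

Lemma cv_eq_lim u l l' : Un_cv u l -> l = l' -> Un_cv u l'.
Proof. intros; subst; auto. Qed.

Lemma inv_cv : Un_cv (fun n => / INR n) 0.
Proof.
  intros eps Heps. destruct (archimed_cor1 eps Heps) as [N1 [H1 H2]].
  exists N1. intros n Hn. unfold R_dist. rewrite Rminus_0_r.
  assert (0 < INR N1) by (apply lt_0_INR; lia).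
  assert (INR N1 <= INR n) by (apply le_INR; lia).
  rewrite Rabs_right; [|left; apply Rinv_0_lt_compat; lra].
  eapply Rle_lt_trans; [|exact H1]. apply Rinv_le_contravar; lra.
Qed.

Lemma ln_cont_seq u l : 0 < l -> Un_cv u l -> Un_cv (fun n => ln (u n)) (ln l).
Proof.
  intros Hl Hu. apply (continuity_seq ln u l); [|exact Hu].
  apply derivable_continuous_pt. exists (/ l). apply derivable_pt_lim_ln; exact Hl.
Qed.

Lemma piece X n Hh : 0 < X -> 0 < n ->
  ln (n + 1) - ln (X + 1) <= Hh <= ln n - ln X ->
  - (X / n * ln (X / n + / n)) <= X / n * Hh <= - (X / n * ln (X / n)).
Proof.
  intros HX Hn [A B].
  assert (Hv : 0 < X / n) by (apply Rdiv_lt_0_compat; lra).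
  rewrite ln_div' by lra.
  replace (X / n + / n) with ((X + 1) / n) by (field; lra).
  rewrite ln_div' by lra.
  assert (ln n < ln (n + 1)) by (apply ln_increasing; lra).
  split.
  - replace (- (X / n * (ln (X + 1) - ln n))) with (X / n * (ln n - ln (X + 1))) by ring.
    apply Rmult_le_compat_l; lra.
  - replace (- (X / n * (ln X - ln n))) with (X / n * (ln n - ln X)) by ring.
    apply Rmult_le_compat_l; lra.
Qed.

Section Main.
Variable alpha : R.
Hypothesis Ha : 0 < alpha < 1.

Definition xN (N : nat) : nat := floorN (alpha * INR N).
Definition SN (N : nat) : R := sumR (map (fun y => Qf N (xN N) y) (seq 0 (S N))).
Definition vN (N : nat) : R := INR (xN N) / INR N.

Lemma xN_spec N : INR (xN N) <= alpha * INR N /\ alpha * INR N - 1 < INR (xN N).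
Proof. apply floorN_spec. pose proof (pos_INR N); nra. Qed.

Lemma xN_le N : (xN N <= N)%nat.
Proof. destruct (xN_spec N). apply INR_le. pose proof (pos_INR N); nra. Qed.

Lemma SN_is N : is_exp_range N (xN N) (SN N).
Proof. apply exp_range_cv, xN_le. Qed.

Lemma vN_cv : Un_cv vN alpha.
Proof.
  apply (squeeze (fun n => alpha - / INR n) vN (fun _ => alpha) alpha 1).
  - intros n Hn. assert (0 < INR n) by (apply lt_0_INR; lia). destruct (xN_spec n). unfold vN. split.
    + apply (Rmult_le_reg_r (INR n)); [lra|]. unfold Rdiv. rewrite Rmult_assoc, Rinv_l by lra.
      rewrite Rmult_minus_distr_r, Rinv_l by lra. lra.
    + apply (Rmult_le_reg_r (INR n)); [lra|]. unfold Rdiv. rewrite Rmult_assoc, Rinv_l by lra. lra.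
  - apply cv_eq_lim with (alpha - 0); [|ring]. apply CV_minus; [apply cv_const|apply inv_cv].
  - apply cv_const.
Qed.

Lemma eventually : exists N0, (2 <= N0)%nat /\ forall N, (N >= N0)%nat -> (1 <= xN N)%nat /\ (xN N < N)%nat.
Proof.
  destruct (archimed_cor1 alpha ltac:(lra)) as [N1 [H1 H2]].
  exists (N1 + 2)%nat. split; [lia|]. intros N HN.
  assert (0 < INR N1) by (apply lt_0_INR; lia).
  assert (INR N1 <= INR N) by (apply le_INR; lia).
  assert (1 < alpha * INR N1).
  { apply (Rmult_lt_compat_r (INR N1)) in H1; [|lra]. rewrite Rinv_l in H1; lra. }
  destruct (xN_spec N). split.
  - assert (Hx : 0 < INR (xN N)) by nra. change 0 with (INR 0) in Hx. apply INR_lt in Hx. lia.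
  - apply INR_lt. nra.
Qed.


Definition cN (n : nat) : R := / INR n - vN n * ln (vN n) - (1 - vN n) * ln (1 - vN n).
Definition aN (n : nat) : R := / INR n - vN n * ln (vN n + / INR n) - (1 - vN n) * ln (1 - vN n + / INR n).

Lemma bounds N : (1 <= xN N)%nat -> (xN N < N)%nat -> aN N <= SN N / INR N <= cN N.
Proof.
  intros H1 H2. unfold SN. rewrite sum_decomp by lia.
  set (x := xN N) in *.
  assert (HX : 1 <= INR x) by (apply (le_INR 1); lia).
  assert (HY : 1 <= INR (N - x)) by (apply (le_INR 1); lia).
  assert (EY : INR (N - x) = INR N - INR x) by (apply minus_INR; lia).
  assert (Hn : 0 < INR N) by (apply lt_0_INR; lia).
  assert (B1 := H_bounds x (N - x) ltac:(lia)).
  assert (B2 := H_bounds (N - x) x ltac:(lia)).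
  rewrite EY in B1, B2 |- *.
  replace (INR x + (INR N - INR x)) with (INR N) in B1 by ring.
  replace (INR N - INR x + INR x) with (INR N) in B2 by ring.
  assert (P1 := piece (INR x) (INR N) (H x (N - x)) ltac:(lra) Hn B1).
  assert (P2 := piece (INR N - INR x) (INR N) (H (N - x) x) ltac:(lra) Hn B2).
  assert (E1 : (INR N - INR x) / INR N = 1 - vN N) by (unfold vN; fold x; field; lra).
  rewrite E1 in P2. assert (Ev : INR x / INR N = vN N) by reflexivity. rewrite Ev in P1.
  unfold aN, cN.
  replace ((1 + INR x * H x (N - x) + (INR N - INR x) * H (N - x) x) / INR N) with
    (/ INR N + INR x / INR N * H x (N - x) + (INR N - INR x) / INR N * H (N - x) x) by (field; lra).
  rewrite Ev, E1. lra.
Qed.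

Lemma main_limit (e : nat -> R) :
  (forall N, (2 <= N)%nat -> is_exp_range N (xN N) (e N)) ->
  Un_cv (fun N => e N / INR N) (entropy alpha).
Proof.
  intros He. destruct eventually as [N0 [HN0 HE]].
  apply (squeeze aN (fun N => e N / INR N) cN (entropy alpha) N0).
  - intros n Hn. destruct (HE n Hn).
    rewrite (UL_sequence _ _ _ (He n ltac:(lia)) (SN_is n)). apply bounds; auto.
  - unfold aN, entropy. apply cv_eq_lim with (0 - alpha * ln alpha - (1 - alpha) * ln (1 - alpha)); [|ring].
    apply CV_minus; [apply CV_minus|].
    + apply inv_cv.
    + apply CV_mult; [apply vN_cv|]. apply ln_cont_seq; [lra|].
      apply cv_eq_lim with (alpha + 0); [|ring]. apply CV_plus; [apply vN_cv|apply inv_cv].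
    + apply CV_mult; [apply CV_minus; [apply cv_const|apply vN_cv]|]. apply ln_cont_seq; [lra|].
      apply cv_eq_lim with (1 - alpha + 0); [|ring]. apply CV_plus; [apply CV_minus; [apply cv_const|apply vN_cv]|apply inv_cv].
  - unfold cN, entropy. apply cv_eq_lim with (0 - alpha * ln alpha - (1 - alpha) * ln (1 - alpha)); [|ring].
    apply CV_minus; [apply CV_minus|].
    + apply inv_cv.
    + apply CV_mult; [apply vN_cv|]. apply ln_cont_seq; [lra|apply vN_cv].
    + apply CV_mult; [apply CV_minus; [apply cv_const|apply vN_cv]|]. apply ln_cont_seq; [lra|].
      apply CV_minus; [apply cv_const|apply vN_cv].
Qed.

End Main.


Definition cfun (g phi : R -> R) (a b : R) (t : R) : R :=
  if Req_EM_T t a then Rabs (g a - phi a) else if Req_EM_T t b then Rabs (g b - phi b) else 0.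

Definition cfun_step (g phi : R -> R) (a b : R) (Hab : a <= b) : IsStepFun (cfun g phi a b) a b.
Proof.
  exists [a; b]. exists [0]. repeat split.
  - intros i Hi. simpl in Hi. assert (i = 0%nat) by lia. subst. simpl. exact Hab.
  - simpl. rewrite Rmin_left; auto.
  - simpl. rewrite Rmax_right; auto.
  - intros i Hi. simpl in Hi. assert (i = 0%nat) by lia. subst. simpl.
    intros x [Hx1 Hx2]. unfold cfun. destruct (Req_EM_T x a); [lra|]. destruct (Req_EM_T x b); [lra|]. reflexivity.
Defined.

Lemma RI_endpoints f g a b : a <= b -> (forall x, a < x < b -> f x = g x) ->
  Riemann_integrable f a b -> Riemann_integrable g a b.
Proof.
  intros Hab Heq pr eps. destruct (pr eps) as [phi [psi [H1 H2]]].
  set (c := mkStepFun (cfun_step g phi a b Hab)).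
  exists phi. exists (mkStepFun (StepFun_P28 1 psi c)). split.
  - intros t Ht. rewrite Rmin_left, Rmax_right in Ht by auto. simpl.
    assert (Hc : 0 <= c t).
    { simpl; unfold cfun. destruct Req_EM_T; [apply Rabs_pos|]. destruct Req_EM_T; [apply Rabs_pos|lra]. }
    assert (Hp : Rabs (f t - phi t) <= psi t) by (apply H1; rewrite Rmin_left, Rmax_right; auto).
    assert (Hpos : 0 <= psi t) by (pose proof (Rabs_pos (f t - phi t)); lra).
    destruct (Req_EM_T t a) as [Ea|Na].
    + subst t. simpl. unfold cfun. destruct Req_EM_T; [|congruence]. lra.
    + destruct (Req_EM_T t b) as [Eb|Nb].
      * subst t. simpl. unfold cfun. destruct Req_EM_T; [congruence|]. destruct Req_EM_T; [|congruence]. lra.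
      * rewrite <- Heq by lra. simpl in Hc. lra.
  - rewrite StepFun_P30.
    assert (E : RiemannInt_SF c = 0).
    { unfold RiemannInt_SF, c, subdivision_val, subdivision. simpl. destruct Rle_dec; simpl; ring. }
    rewrite E, Rmult_0_r, Rplus_0_r. exact H2.
Qed.

Lemma piece_int f F G a b : a <= b -> (forall x, a <= x <= b -> continuity_pt f x) ->
  (forall x, a <= x <= b -> derivable_pt_lim G x (f x)) -> (forall x, a < x < b -> F x = f x) ->
  { pr : Riemann_integrable F a b | RiemannInt pr = G b - G a }.
Proof.
  intros Hab Hc Hd HF.
  set (prf := continuity_implies_RiemannInt Hab Hc).
  assert (prF := RI_endpoints f F a b Hab (fun x Hx => eq_sym (HF x Hx)) prf).
  exists prF. rewrite (RiemannInt_P18 prF prf Hab HF).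
  rewrite (RiemannInt_P20 Hab (FTC_P1 Hab Hc) prf).
  assert (A1 := RiemannInt_P29 Hab Hc).
  assert (A2 : antiderivative f G a b).
  { split; [|exact Hab]. intros x Hx. exists (exist _ (f x) (Hd x Hx)). reflexivity. }
  destruct (antiderivative_Ucte _ _ _ _ _ A1 A2) as [c Hcst].
  rewrite (Hcst b), (Hcst a) by lra. ring.
Qed.

Lemma cont_c_div c x : 0 < x -> continuity_pt (fun t => c / t) x.
Proof.
  intros Hx. change (continuity_pt (fct_cte c / id)%F x).
  apply continuity_pt_div; [apply continuity_pt_const; intros u v; reflexivity|apply derivable_continuous_pt; exists 1; apply derivable_pt_lim_id|].
  unfold id; lra.
Qed.

Lemma deriv_c_ln c x : 0 < x -> derivable_pt_lim (fun t => c * ln t) x (c / x).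
Proof.
  intros Hx. exact (derivable_pt_lim_scal ln c x (/ x) (derivable_pt_lim_ln x Hx)).
Qed.

Section Int.
Variable alpha : R.
Hypothesis Ha : 0 < alpha < 1.
Let a := Rmin alpha (1 - alpha).
Let b := Rmax alpha (1 - alpha).

Lemma ab_facts : 0 < a /\ a <= b /\ b < 1 /\ a + b = 1.
Proof.
  unfold a, b, Rmin, Rmax. destruct Rle_dec; lra.
Qed.

Lemma g_low x : x <= a -> g_alpha alpha x = 0.
Proof. intros H. unfold g_alpha. cbv zeta. fold a b. destruct Rlt_dec; [lra|reflexivity]. Qed.

Lemma g_mid x : a < x < b -> g_alpha alpha x = a / x ^ 2.
Proof. intros H. unfold g_alpha. cbv zeta. fold a b. destruct Rlt_dec; [|lra]. destruct Rlt_dec; [reflexivity|lra]. Qed.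

Lemma g_high x : a < x -> b <= x <= 1 -> g_alpha alpha x = 1 / x ^ 2.
Proof.
  intros H H'. unfold g_alpha. cbv zeta. fold a b. destruct Rlt_dec; [|lra].
  destruct Rlt_dec; [lra|]. destruct Rle_dec; [reflexivity|lra].
Qed.

Lemma integral_part : exists pr : Riemann_integrable (fun beta => beta * g_alpha alpha beta) 0 1,
     RiemannInt pr = entropy alpha.
Proof.
  destruct ab_facts as [Ha0 [Hab [Hb1 Hsum]]].
  set (F := fun beta => beta * g_alpha alpha beta).
  assert (S1 := piece_int (fun _ => 0) F (fun _ => 0) 0 a ltac:(lra)
    (fun x _ => continuity_pt_const (fun _ => 0) x (fun u v => eq_refl))
    (fun x _ => derivable_pt_lim_const 0 x)
    (fun x Hx => ltac:(unfold F; rewrite g_low by lra; ring))).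
  destruct S1 as [p1 E1].
  assert (S2 := piece_int (fun t => a / t) F (fun t => a * ln t) a b Hab
    (fun x Hx => cont_c_div a x ltac:(lra))
    (fun x Hx => deriv_c_ln a x ltac:(lra))
    (fun x Hx => ltac:(unfold F; rewrite g_mid by lra; field; lra))).
  destruct S2 as [p2 E2].
  assert (S3 := piece_int (fun t => 1 / t) F (fun t => 1 * ln t) b 1 ltac:(lra)
    (fun x Hx => cont_c_div 1 x ltac:(lra))
    (fun x Hx => deriv_c_ln 1 x ltac:(lra))
    (fun x Hx => ltac:(unfold F; rewrite g_high by lra; field; lra))).
  destruct S3 as [p3 E3].
  set (p12 := RiemannInt_P24 p1 p2). set (p := RiemannInt_P24 p12 p3).
  exists p.
  rewrite <- (RiemannInt_P25 p12 p3 p) by lra.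
  rewrite <- (RiemannInt_P25 p1 p2 p12) by lra.
  rewrite E1, E2, E3, ln_1.
  unfold entropy. revert Hsum. unfold a, b, Rmin, Rmax. destruct Rle_dec; intros.
  - ring.
  - replace (1 - (1 - alpha)) with alpha by ring. ring.
Qed.
End Int.

Lemma entropy_le alpha : 0 < alpha < 1 -> entropy alpha <= ln 2.
Proof.
  intros Ha.
  assert (K : forall t, 0 < t -> - t * ln t <= ln 2 * t + (/2 - t)).
  { intros t Ht. assert (E := ln_le_sub1 (/ (2 * t)) ltac:(apply Rinv_0_lt_compat; lra)).
    rewrite ln_Rinv, ln_mult in E by lra.
    assert (E2 : t * (- (ln 2 + ln t)) <= t * (/ (2 * t) - 1)) by (apply Rmult_le_compat_l; lra).
    replace (t * (/ (2 * t) - 1)) with (/2 - t) in E2 by (field; lra). lra. }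
  unfold entropy. pose proof (K alpha ltac:(lra)). pose proof (K (1 - alpha) ltac:(lra)). lra.
Qed.

Lemma entropy_half : entropy (1/2) = ln 2.
Proof.
  unfold entropy. replace (1 - 1/2) with (/2) by field. replace (1/2) with (/2) by field.
  rewrite ln_Rinv by lra. field.
Qed.


Theorem mainTheorem4 (alpha : R) (Ha : 0 < alpha < 1) :
  (forall N : nat, (2 <= N)%nat -> exists l, is_exp_range N (floorN (alpha * INR N)) l) /\
  (forall e : nat -> R,
     (forall N : nat, (2 <= N)%nat -> is_exp_range N (floorN (alpha * INR N)) (e N)) ->
     Un_cv (fun N => e N / INR N) (entropy alpha)) /\
  (exists pr : Riemann_integrable (fun beta => beta * g_alpha alpha beta) 0 1,
     RiemannInt pr = entropy alpha) /\
  entropy alpha <= ln 2 /\ entropy (1/2) = ln 2.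
Proof.
  split; [|split; [|split]].
  - intros N HN. exists (SN alpha N). apply SN_is; auto.
  - intros e He. apply (main_limit alpha Ha e He).
  - apply integral_part; auto.
  - split; [apply entropy_le; auto | apply entropy_half].
Qed.
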